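(* Fix a positive integer $n$ and let $f_n(z)=\frac{z^n(2-z)}{2z-1}$, defined on $\mathbb{D}\setminus\{1/2\}$. Then $f_n\in\mathcal{S}_1$, and there exist $\delta_n>0$ and $\delta_n'>0$ such that: $P_n(f_n;z_1,\dots,z_n)$ is positive semidefinite for all distinct $z_1,\dots,z_n$ with $|z_i|<\delta_n$; and $P_{n+1}(f_n;z_1,\dots,z_{n+1})$ has exactly one negative eigenvalue for all distinct $z_1,\dots,z_{n+1}$ with $|z_i|<\delta_n'$.
   Context: $\mathbb{D}$ is the open unit disk. Pick matrix: $P_n(f;z_1,\dots,z_n)=\left[\frac{1-f(z_i)\overline{f(z_j)}}{1-z_i\overline{z_j}}\right]_{i,j=1}^n$. $\mathcal{S}_\kappa$: functions defined on $\mathbb{D}\setminus\Lambda$ for a discrete $\Lambda$ (at most countable, accumulating only on the unit circle) all of whose Pick matrices at distinct points have at most $\kappa$ negative eigenvalues, at least one having exactly $\kappa$. *)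

(* Defs.v *)
From HB Require Import structures.
From mathcomp Require Import all_boot all_order all_algebra.
From mathcomp Require Import complex.
From mathcomp Require Import reals classical_sets cardinality.

Set Implicit Arguments.
Unset Strict Implicit.
Unset Printing Implicit Defensive.

Import Order.TTheory GRing.Theory Num.Theory.
Local Open Scope ring_scope.
Local Open Scope classical_set_scope.

Section Defs.
Variable R : realType.
Local Notation C := R[i].

Definition disk : set C := [set z | `|z| < 1].

Definition PickM (f : C -> C) (N : nat) (z : 'I_N -> C) : 'M[C]_N :=
  \matrix_(i, j) ((1 - f (z i) * (f (z j))^*) / (1 - z i * (z j)^*)).

(* A (square, complex) matrix A has exactly k negative eigenvalues, counted
   with algebraic multiplicity: its characteristic polynomial splits as
   prod_(l <- s) (X - l) and exactly k of the roots l in s are negative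
   reals.  (In a numClosedFieldType, l < 0 forces l to be real.)  The
   multiset s of roots is unique, so k is well defined. *)
Definition neg_eigs (N : nat) (A : 'M[C]_N) (k : nat) : Prop :=
  exists s : seq C,
    char_poly A = \prod_(l <- s) ('X - l%:P) /\ count (fun l => l < 0) s = k.

Definition hermitian (N : nat) (A : 'M[C]_N) : Prop :=
  forall i j, A j i = (A i j)^*.

Definition psd (N : nat) (A : 'M[C]_N) : Prop :=
  hermitian A /\ forall l : C, root (char_poly A) l -> 0 <= l.

(* Admissible exceptional sets Lambda: subsets of the disk, at most
   countable, accumulating only on the unit circle (i.e. finitely many
   points in each closed disk of radius r < 1). *)
Definition discrete_in_disk (Lam : set C) : Prop :=
  Lam `<=` disk /\ countable Lam /\
  forall r : R, r < 1 -> finite_set (Lam `&` [set z | `|z| <= (r%:C)%C]).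

Definition S_kappa (kappa : nat) (Lam : set C) (f : C -> C) : Prop :=
  discrete_in_disk Lam /\
  (forall (N : nat) (z : 'I_N -> C), injective z ->
     (forall i, z i \in (disk `\` Lam)) ->
     exists k, (k <= kappa)%N /\ neg_eigs (PickM f z) k) /\
  (exists (N : nat) (z : 'I_N -> C), injective z /\
     (forall i, z i \in (disk `\` Lam)) /\ neg_eigs (PickM f z) kappa).

Definition fn (n : nat) (z : C) : C := z ^+ n * (2 - z) / (2 * z - 1).

End Defs.

(* Main.v *)
Require Import Defs.
From HB Require Import structures.
From mathcomp Require Import all_boot all_order all_algebra.
From mathcomp Require Import complex.
From mathcomp Require Import reals classical_sets cardinality.
From mathcomp Require Import ring lra zify.

Set Implicit Arguments.
Unset Strict Implicit.
Import Order.TTheory GRing.Theory Num.Theory.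
Local Open Scope ring_scope.

Section LA.
Variable R : realType.
Local Notation C := R[i].

Definition ctr N (x : 'rV[C]_N) : 'cV[C]_N := (map_mx Num.conj x)^T.
Definition Qf N (A : 'M[C]_N) (x : 'rV[C]_N) : C := (x *m A *m ctr x) 0 0.

Lemma char_poly_sim N (U D : 'M[C]_N) : U \in unitmx ->
  char_poly (invmx U *m D *m U) = char_poly D.
Proof.
move=> Uu; rewrite /char_poly /char_poly_mx.
have -> : 'X%:M - map_mx polyC (invmx U *m D *m U) =
   map_mx polyC (invmx U) *m ('X%:M - map_mx polyC D) *m map_mx polyC U.
  rewrite mulmxBr mulmxBl !map_mxM; congr (_ - _).
  by rewrite mul_mx_scalar -scalemxAl -map_mxM mulVmx // map_mx1 scalemx1.
rewrite !det_mulmx mulrC mulrA -det_mulmx -map_mxM mulmxV //.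
by rewrite map_mx1 det1 mul1r.
Qed.

Lemma herm_spec N (A : 'M[C]_N) : Defs.hermitian A ->
  exists (U : 'M[C]_N) (d : 'rV[C]_N),
   [/\ char_poly A = \prod_(i < N) ('X - (d 0 i)%:P),
       forall i, d 0 i \is Num.real,
       forall y, Qf A (y *m U) = \sum_i d 0 i * (y 0 i * (y 0 i)^*) &
       U \in unitmx].
Proof.
move=> hA.
have hA' : A \is hermitianmx _ false (@Num.conj_op C).
  apply/is_hermitianmxP; rewrite expr0 scale1r.
  by apply/matrixP => i j; rewrite !mxE hA.
have /hermitian_normalmx/orthomx_spectralP Aeq := hA'.
set U := spectralmx A in Aeq; set d := spectral_diag A in Aeq.
have Uu : U \is unitarymx by apply: spectral_unitarymx.
have Uinv : U \in unitmx by apply: spectral_unit.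
exists U, d; split => //.
- by rewrite Aeq char_poly_sim // char_poly_trig ?diag_mx_is_trig //;
    apply: eq_bigr => i _; rewrite mxE eqxx mulr1n.
- move=> i; have := hermitian_spectral_diag_real hA'.
  by move/mxOverP => /(_ 0 i).
- move=> y; rewrite /Qf Aeq.
  have -> : ctr (y *m U) = (U ^t (@Num.conj_op C))%sesqui *m ctr y.
    apply/matrixP => i j; rewrite !mxE rmorph_sum; apply: eq_bigr => k _; by rewrite !mxE rmorphM mulrC.
  rewrite !mulmxA mulmxK // mulmxtVK // !mxE; apply: eq_bigr => i _.
  rewrite !mxE (bigD1 i) //= big1 ?addr0; last first.
    by move=> j ji; rewrite mxE (negbTE ji) mulr0n mulr0.
  by rewrite mxE eqxx mulr1n; ring.
Qed.

Lemma cnt (N : nat) (T:Type) (f : 'I_N -> T) (P : pred T) :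
  count P [seq f i | i <- enum 'I_N] = #|[pred i | P (f i)]|.
Proof.
by rewrite count_map cardE /enum_mem size_filter count_filter;
  apply: eq_count => i; rewrite /= !inE andbT.
Qed.

Definition Lf N (w : 'cV[C]_N) (x : 'rV[C]_N) : C := (x *m w) 0 0.

Lemma inertia N (A : 'M[C]_N) (w : 'cV[C]_N) : Defs.hermitian A ->
  (forall x, Lf w x = 0 -> 0 <= Qf A x) ->
  exists s : seq C, [/\ char_poly A = (\prod_(l <- s) ('X - l%:P))%R,
     {in s, forall l, l \is Num.real /\ exists x, Qf A x = l},
     (count (fun l : C => (l < 0)%R) s <= 1)%N &
     ((exists x, Qf A x < 0) -> (0 < count (fun l : C => (l < 0)%R) s)%N)].
Proof.
move=> hA hL; have [U [d [hc hr hq Uu]]] := herm_spec hA.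
set s := [seq d 0 i | i <- enum 'I_N].
have ed : forall k, Qf A (delta_mx 0 k *m U) = d 0 k.
  move=> k; rewrite hq (bigD1 k) //= big1 ?addr0.
    by rewrite !mxE !eqxx /= mul1r conjC1 mulr1.
  by move=> j /negbTE jk; rewrite !mxE jk /= mul0r mulr0.
exists s; split.
- by rewrite hc big_map big_enum.
- move=> l /mapP [k _ ->]; split => //; by exists (delta_mx 0 k *m U).
- rewrite cnt leqNgt; apply/negP => /card_gt1P [a [b [ha hb ab]]].
  rewrite !inE /= in ha hb.
  have lin : forall (p q : C) y1 y2, Lf w ((p *: y1 + q *: y2) *m U) =
      p * Lf w (y1 *m U) + q * Lf w (y2 *m U).
    by move=> p q y1 y2; rewrite /Lf mulmxDl -!scalemxAl mulmxDl -!scalemxAl !mxE.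
  case: (eqVneq (Lf w (delta_mx 0 a *m U)) 0) => [h0|hn0].
    have := hL _ h0; rewrite ed => h; have := lt_le_trans ha h.
    by rewrite ltxx.
  set al := Lf w (delta_mx 0 b *m U); set be := - Lf w (delta_mx 0 a *m U).
  have hy : Lf w ((al *: delta_mx 0 a + be *: delta_mx 0 b) *m U) = 0.
    by rewrite lin /be /al; ring.
  have := hL _ hy; rewrite hq.
  have ent : forall k, (al *: delta_mx 0 a + be *: delta_mx 0 b : 'rV_N) 0 k =
     al * (k == a)%:R + be * (k == b)%:R.
    by move=> k; rewrite !mxE eqxx.
  rewrite (bigD1 a) //= (bigD1 b) /=; last by rewrite eq_sym.
  rewrite big1; last first.
    move=> k /andP [kb ka]; rewrite ent (negbTE kb) (negbTE ka).
    by rewrite !mulr0 addr0 conjC0 !mulr0.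
  rewrite !ent eqxx (negbTE ab) eq_sym (negbTE ab) eqxx !mulr0 !mulr1 addr0 add0r addr0.
  have h1 : d 0 a * (al * al^*) <= 0 by rewrite nmulr_rle0 // mul_conjC_ge0.
  have h2 : d 0 b * (be * be^*) < 0 by rewrite nmulr_rlt0 // mul_conjC_gt0 oppr_eq0.
  have := ler_ltD h1 h2; rewrite addr0 => hlt hge.
  by have := lt_le_trans hlt hge; rewrite ltxx.
- move=> [x hx]; rewrite cnt lt0n; apply/negP => /eqP H0.
  have {}H0 := card0_eq H0.
  have dge : forall k, 0 <= d 0 k.
    move=> k; have := H0 k; rewrite !inE /= => /negbT.
    by rewrite real_leNgt ?real0 ?hr.
  have : x = (x *m invmx U) *m U by rewrite mulmxKV.
  move=> ex; rewrite ex hq in hx.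
  have : 0 <= \sum_i d 0 i * ((x *m invmx U) 0 i * ((x *m invmx U) 0 i)^*).
    by apply: sumr_ge0 => i _; rewrite mulr_ge0 ?mul_conjC_ge0.
  by move=> hge; have := lt_le_trans hx hge; rewrite ltxx.
Qed.
End LA.


Section P.
Variable R : realType.
Local Notation C := R[i].

Definition gg (n : nat) (z : C) := z ^+ n / (2 * z - 1).

Lemma pick_entry n (z w : C) : `|z| < 1 -> `|w| < 1 -> z != 2^-1 -> w != 2^-1 ->
  (1 - fn n z * (fn n w)^*) / (1 - z * w^*) =
   \sum_(k < n) (z * w^*) ^+ k - 3 * (gg n z * (gg n w)^*).
Proof.
move=> hz hw hz2 hw2.
have h1 : 1 - z * w^* != 0.
  rewrite subr_eq0; apply/negP => /eqP h.
  have : `|z * w^*| < 1.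
    rewrite normrM norm_conjC.
    have := normr_ge0 w; have := normr_ge0 z => a b.
    have : `|z| * `|w| < 1 * 1.
      by apply: ltr_pM.
    by rewrite mulr1.
  by rewrite -h normr1 ltxx.
have h2 : forall u : C, u != 2^-1 -> 2 * u - 1 != 0.
  move=> u hu; apply: contra hu; rewrite subr_eq0 => /eqP h.
  apply/eqP; have h2n : (2:C) != 0 by rewrite pnatr_eq0.
  by rewrite -[u](mulKf h2n) h mulr1.
have h3 : 2 * w^* - 1 != 0.
  have := h2 _ hw2; apply: contra => /eqP h.
  by rewrite -conjC_eq0 rmorphB rmorphM rmorph_nat rmorph1 h.
have gs : \sum_(k < n) (z * w^*) ^+ k = (1 - (z * w^*) ^+ n) / (1 - z * w^*).
  apply: (mulIf h1); rewrite divfK // -[1 - _ ^+ n]opprB subrX1; ring.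
rewrite gs /gg /fn !rmorphM !rmorphXn fmorphV !rmorphB !rmorphM rmorph_nat rmorph1.
have h4 := h2 _ hz2.
rewrite exprMn.
field.
by rewrite h1 h3 h4.
Qed.

Definition good (z : C) := `|z| < 1 /\ z != 2^-1.

Lemma Qf_sum N (A : 'M[C]_N) x :
  Qf A x = \sum_i \sum_j x 0 i * A i j * (x 0 j)^*.
Proof.
rewrite /Qf /ctr mxE [RHS]exchange_big; apply: eq_bigr => j _.
by rewrite !mxE big_distrl; apply: eq_bigr.
Qed.

Lemma sum_conj N (u : 'I_N -> C) :
  \sum_i \sum_j u i * (u j)^* = (\sum_i u i) * (\sum_i u i)^*.
Proof.
rewrite rmorph_sum big_distrl; apply: eq_bigr => i _.
by rewrite big_distrr.
Qed.

Lemma Q_pick n N (z : 'I_N -> C) (hz : forall i, good (z i)) x :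
  Qf (PickM (@fn R n) z) x =
   \sum_(k < n) ((\sum_i x 0 i * z i ^+ k) * (\sum_i x 0 i * z i ^+ k)^*)
   - 3 * ((\sum_i x 0 i * gg n (z i)) * (\sum_i x 0 i * gg n (z i))^*).
Proof.
rewrite Qf_sum.
under eq_bigr => i _ do under eq_bigr => j _ do rewrite mxE
  pick_entry ?(hz i).1 ?(hz i).2 ?(hz j).1 ?(hz j).2 //.
transitivity (\sum_i \sum_j (\sum_(k < n) (x 0 i * z i ^+ k) * (x 0 j * z j ^+ k)^*
     - 3 * ((x 0 i * gg n (z i)) * (x 0 j * gg n (z j))^*))).
  apply: eq_bigr => i _; apply: eq_bigr => j _.
  rewrite mulrBr mulrBl big_distrr big_distrl; congr (_ - _).
    apply: eq_bigr => k _; rewrite /= rmorphM rmorphXn exprMn; ring.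
  rewrite /=; set a := gg n (z i); set b := gg n (z j); rewrite [(x 0 j * b)^*]rmorphM; ring.
under eq_bigr => i _ do rewrite sumrB.
rewrite sumrB; congr (_ - _).
  under eq_bigr => i _ do rewrite exchange_big.
  rewrite exchange_big; apply: eq_bigr => k _.
  exact: (sum_conj (fun i => x 0 i * z i ^+ k)).
rewrite -(sum_conj (fun i => x 0 i * gg n (z i))) mulr_sumr.
by apply: eq_bigr => i _; rewrite mulr_sumr.
Qed.
End P.


Section N.
Variable R : realType.
Local Notation C := R[i].

Definition nr (x : C) : R := complex.Re `|x|.

Lemma normE (x : C) : `|x| = ((nr x)%:C)%C.
Proof. by rewrite /nr RRe_real ?normr_real. Qed.

Lemma nr_ge0 x : 0 <= nr x.
Proof. by rewrite -lecR -normE normr_ge0. Qed.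

Lemma nrD x y : nr (x + y) <= nr x + nr y.
Proof. by rewrite -lecR rmorphD -!normE ler_normD. Qed.

Lemma nrM x y : nr (x * y) = nr x * nr y.
Proof. by apply: complexI; rewrite rmorphM -!normE normrM. Qed.

Lemma nrN x : nr (- x) = nr x.
Proof. by apply: complexI; rewrite -!normE normrN. Qed.

Lemma nrB x y : nr (x - y) <= nr x + nr y.
Proof. by rewrite -(nrN y) nrD. Qed.

Lemma nr_nat k : nr (k%:R) = k%:R.
Proof. by apply: complexI; rewrite -normE normr_nat rmorph_nat. Qed.

Lemma nr_sum I (r : seq I) (P : pred I) (F : I -> C) :
  nr (\sum_(i <- r | P i) F i) <= \sum_(i <- r | P i) nr (F i).
Proof.
elim/big_ind2: _ => //.
- by rewrite (nr_nat 0).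
- move=> a1 b1 a2 b2 h1 h2; apply: le_trans (nrD _ _) _; exact: lerD.
Qed.


Lemma nrX x k : nr (x ^+ k) = nr x ^+ k.
Proof. by apply: complexI; rewrite -normE normrX rmorphXn normE. Qed.

Lemma nr_conj x : x * x^* = ((nr x ^+ 2)%:C)%C.
Proof. by rewrite -normCK normE rmorphXn. Qed.

Lemma nr_lt x (r : R) : (`|x| < (r%:C)%C) = (nr x < r).
Proof. by rewrite normE ltcR. Qed.

Definition pn K (p : {poly C}) : R := \sum_(j < K) nr p`_j.

Lemma pn_ge0 K p : 0 <= pn K p.
Proof. by apply: sumr_ge0 => j _; apply: nr_ge0. Qed.

Lemma pnD K p q : pn K (p + q) <= pn K p + pn K q.
Proof.
rewrite /pn -big_split /=; apply: ler_sum => j _; rewrite coefD; exact: nrD.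
Qed.

Lemma pnZ K c p : pn K (c *: p) = nr c * pn K p.
Proof. by rewrite /pn mulr_sumr; apply: eq_bigr => j _; rewrite coefZ nrM. Qed.

Lemma pnX K p : pn K (p * 'X) <= pn K p.
Proof.
case: K => [|K]; first by rewrite /pn !big_ord0.
rewrite /pn big_ord_recl coefMX /= (nr_nat 0) add0r.
rewrite [X in _ <= X]big_ord_recr /=; apply: ler_wpDr; first exact: nr_ge0.
by apply: ler_sum => j _; rewrite coefMX /=.
Qed.

Lemma prod_bound K (d : R) (s : seq C) : 0 <= d <= 1 -> all (fun a => nr a <= d) s ->
  pn K (\prod_(a <- s) ('X - a%:P)) <= 2 ^+ size s /\
  pn K ('X^(size s) - \prod_(a <- s) ('X - a%:P)) <= d * 2 ^+ size s.
Proof.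
move=> /andP [d0 d1]; elim: s => [|b s IH] /=.
  rewrite big_nil subrr expr0 mulr1; split; last by rewrite /pn big1 // => j _; rewrite coef0 (nr_nat 0).
  case: K => [|K]; rewrite /pn ?big_ord0 ?ler01 // big_ord_recl big1 ?coef1 /=.
    by rewrite (nr_nat 1) addr0.
  by move=> j _; rewrite coef1 /= (nr_nat 0).
move=> /andP [hb /IH [h1 h2]].
rewrite big_cons.
set w := \prod_(a <- s) ('X - a%:P).
have e1 : ('X - b%:P) * w = w * 'X + (- b) *: w.
  by rewrite mulrBl mulrC scaleNr -mul_polyC; ring.
have e2 : 'X^((size s).+1) - ('X - b%:P) * w = ('X^(size s) - w) * 'X + b *: w.
  by rewrite e1 exprS scaleNr; ring.
have hw : pn K (b *: w) <= d * 2 ^+ size s.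
  by rewrite pnZ; apply: ler_pM; rewrite ?nr_ge0 ?pn_ge0.
split.
  rewrite e1 exprS; apply: le_trans (pnD _ _ _) _.
  rewrite pnZ nrN.
  have := pnX K w; have := pn_ge0 K w; have := nr_ge0 b.
  move=> a0 b0 c0.
  have : nr b * pn K w <= d * 2 ^+ size s by apply: ler_pM.
  have t0 : 0 <= 2 ^+ size s :> R by apply: exprn_ge0.
  have : d * 2 ^+ size s <= 2 ^+ size s by apply: ler_piMl.
  lra.
rewrite e2; apply: le_trans (pnD _ _ _) _.
rewrite exprS; have := pnX K ('X^(size s) - w); lra.
Qed.
End N.


Section A.
Variable R : realType.
Local Notation C := R[i].

Lemma cs_sum n (a : 'I_n -> R) : (\sum_i a i) ^+ 2 <= n%:R * \sum_i a i ^+ 2.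
Proof.
rewrite expr2 mulr_suml.
have h : forall i j, a i * a j <= (a i ^+ 2 + a j ^+ 2) / 2.
  by move=> i j; have := sqr_ge0 (a i - a j); nra.
apply: le_trans (_ : \sum_i \sum_j (a i ^+ 2 + a j ^+ 2) / 2 <= _).
  apply: ler_sum => i _; rewrite mulr_sumr; apply: ler_sum => j _; exact: h.
have -> : \sum_i \sum_j (a i ^+ 2 + a j ^+ 2) / 2 =
   (\sum_i \sum_(j < n) a i ^+ 2 + \sum_(i < n) \sum_j a j ^+ 2) / 2.
  rewrite -big_split mulr_suml; apply: eq_bigr => i _.
  by rewrite -big_split mulr_suml.
rewrite [X in X + _](_ : _ = n%:R * \sum_i a i ^+ 2).
  rewrite [X in _ + X](_ : _ = n%:R * \sum_i a i ^+ 2); first by lra.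
  by rewrite sumr_const card_ord mulr_natl.
rewrite mulr_sumr; apply: eq_bigr => i _.
by rewrite sumr_const card_ord mulr_natl.
Qed.


Definition dl (n : nat) : R := (4 ^+ n * (4 * (n%:R + 1)))^-1.

Lemma dl_gt0 n : 0 < dl n.
Proof.
have hn0 : 0 <= n%:R :> R := ler0n _ _.
rewrite invr_gt0; apply: mulr_gt0; last by lra.
by apply: exprn_gt0; lra.
Qed.

Lemma dl_le n : dl n <= 4^-1.
Proof.
have hn0 : 0 <= n%:R :> R := ler0n _ _.
have h1 : 1 <= 4 ^+ n :> R by apply: exprn_ege1; lra.
rewrite /dl lef_pV2 ?posrE; try lra.
  nra.
apply: mulr_gt0; lra.
Qed.

Lemma good_small (z : C) n : nr z < dl n -> good z.
Proof.
move=> h; have := dl_le n => h'.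
split.
  by rewrite nr_lt; lra.
apply/eqP => e; move: h; rewrite e.
have -> : nr (2^-1 : C) = 2^-1.
  by apply: complexI; rewrite -normE fmorphV rmorph_nat normfV normr_nat.
lra.
Qed.

Lemma helper1 (a b c S P : R) : a <= 2 * b + c -> c <= S -> b + S <= P -> a + S <= 2 * P.
Proof. lra. Qed.
Lemma helper2 (a b c S : R) : a + S <= b -> 0 <= S -> b <= c -> a <= c.
Proof. lra. Qed.

Lemma small_psd n (hn : (0 < n)%N) (z : 'I_n -> C) :
  (forall i, nr (z i) < dl n) -> forall x, 0 <= Qf (PickM (@fn R n) z) x.
Proof.
move=> hz x.
have hg : forall i, good (z i) by move=> i; apply: (@good_small _ n).
have h2z : forall i, 2 * z i - 1 != 0.
  move=> i; have [_ hi] := hg i; apply: contra hi; rewrite subr_eq0 => /eqP h.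
  apply/eqP; have h2n : (2:C) != 0 by rewrite pnatr_eq0.
  by rewrite -[z i](mulKf h2n) h mulr1.
rewrite Q_pick //.
pose m k := \sum_i x 0 i * z i ^+ k.
pose W := \sum_i x 0 i * gg n (z i).
pose T := \sum_(k < n) nr (m k) ^+ 2.
pose S := \sum_(k < n) nr (m k).
pose w := nr W.
have -> : \sum_(k < n) ((\sum_i x 0 i * z i ^+ k) * (\sum_i x 0 i * z i ^+ k)^*)
   - 3 * ((\sum_i x 0 i * gg n (z i)) * (\sum_i x 0 i * gg n (z i))^*) =
   ((T - 3 * w ^+ 2)%:C)%C.
  rewrite [in RHS]rmorphB [in RHS]rmorphM [in RHS]rmorph_nat [in RHS]rmorph_sum.
  rewrite [_ * _^* in X in _ - X]nr_conj; congr (_ - _).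
  by apply: eq_bigr => k _; rewrite nr_conj.
rewrite ler0c.
have T0 : 0 <= T by apply: sumr_ge0 => k _; apply: sqr_ge0.
have S0 : 0 <= S by apply: sumr_ge0 => k _; apply: nr_ge0.
have w0 : 0 <= w by apply: nr_ge0.
have cs : S ^+ 2 <= n%:R * T by apply: (cs_sum (fun k => nr (m k))).
have key : w <= dl n * 4 ^+ n * (w + S).
  set s := [seq z i | i <- enum 'I_n].
  have ss : size s = n by rewrite size_map size_enum_ord.
  have hall : all (fun a => nr a <= dl n) s.
    by apply/allP => a /mapP [i _ ->]; apply: ltW.
  have d01 : 0 <= dl n <= 1.
    by rewrite ltW ?dl_gt0 //=; have := dl_le n; lra.
  have [_ hb] := prod_bound n d01 hall; rewrite ss in hb.
  move: hb; set om := \prod_(a <- s) ('X - a%:P); set r := 'X^n - om => hb.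
  have som : size om = n.+1 by rewrite size_prod_XsubC ss.
  have mom : om \is monic by apply: monic_prod_XsubC.
  have sr : (size r <= n)%N.
    apply/leq_sizeP => j hj; rewrite coefB coefXn.
    case: (ltngtP j n) hj => // [hjn _|-> _].
      by rewrite nth_default ?som // subr0.
    by have := monicP mom; rewrite lead_coefE som /= => ->; rewrite subrr.
  have hr : forall i, z i ^+ n = \sum_(j < n) r`_j * z i ^+ j.
    move=> i; rewrite -horner_coef_wide // /r hornerD hornerN hornerXn.
    have : root om (z i) by rewrite root_prod_XsubC; apply: map_f; rewrite mem_enum.
    by move/rootP => ->; rewrite subr0.
  pose v j := \sum_i x 0 i * z i ^+ j / (2 * z i - 1).
  have hv1 : forall j, v j = 2 * v j.+1 - m j.
    move=> j; rewrite /v /m mulr_sumr -sumrB; apply: eq_bigr => i _.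
    by rewrite exprS; field; apply: h2z.
  have hvn : v n = W by rewrite /v /W /gg; apply: eq_bigr => i _; rewrite mulrA.
  have hW : W = \sum_(j < n) r`_j * v j.
    rewrite [RHS](eq_bigr (fun j : 'I_n => \sum_i r`_j * (x 0 i * z i ^+ j / (2 * z i - 1)))); last first.
      by move=> j _; rewrite mulr_sumr.
    rewrite exchange_big; apply: eq_bigr => i _.
    rewrite /gg hr mulr_suml mulr_sumr; apply: eq_bigr => j _; ring.
  have hmS : forall j, (j < n)%N -> nr (m j) <= S.
    move=> j hj; rewrite /S (bigD1 (Ordinal hj)) //= lerDl.
    by apply: sumr_ge0 => k _; apply: nr_ge0.
  have bound : forall k, (k <= n)%N -> nr (v (n - k)%N) + S <= 2 ^+ k * (w + S).
    elim => [_|k IH hk].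
      by rewrite subn0 hvn expr0 mul1r.
    have hj : (n - k.+1 < n)%N by lia.
    have e1 : (n - k.+1).+1 = (n - k)%N by lia.
    rewrite hv1 e1 exprS -mulrA.
    have := IH (ltnW hk); have := hmS _ hj.
    have := nrB (2 * v (n - k)%N) (m (n - k.+1)%N); rewrite nrM (@nr_nat R 2).
    by move=> a b c; apply: helper1 a b c.
  have hvj : forall j : 'I_n, nr (v j) <= 2 ^+ n * (w + S).
    move=> j; have hj : (j <= n)%N := ltnW (ltn_ord j).
    have := bound (n - j)%N (leq_subr _ _); rewrite (subKn hj).
    have h1 : 2 ^+ (n - j)%N <= 2 ^+ n :> R by rewrite ler_eXn2l ?leq_subr // ltr1n.
    move=> h2; have wS : 0 <= w + S by apply: addr_ge0.
    exact: (helper2 h2 S0 (ler_wpM2r wS h1)).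
  apply: (@le_trans _ _ (nr (\sum_(j < n) r`_j * v j))); first by rewrite /w hW.
  apply: le_trans (nr_sum _ _ _) _.
  apply: le_trans (_ : \sum_(j < n) nr r`_j * (2 ^+ n * (w + S)) <= _).
    by apply: ler_sum => j _; rewrite nrM; apply: ler_wpM2l; [exact: nr_ge0 | exact: hvj].
  rewrite -mulr_suml -[\sum_(j < n) nr _]/(pn n r).
  have e4 : (4 : R) ^+ n = 2 ^+ n * 2 ^+ n by rewrite -exprMn -natrM.
  have -> : dl n * 4 ^+ n * (w + S) = dl n * 2 ^+ n * (2 ^+ n * (w + S)) by rewrite e4; ring.
  apply: ler_wpM2r hb; apply: mulr_ge0; [apply: exprn_ge0 | apply: addr_ge0] => //.
have hn1 : 1 <= n%:R :> R by rewrite ler1n.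
have e : dl n * 4 ^+ n * (4 * (n%:R + 1)) = 1.
  rewrite /dl -mulrA mulVf //; apply: lt0r_neq0; apply: mulr_gt0; last by lra.
  by apply: exprn_gt0; lra.
have c0 : 0 <= 4 * (n%:R + 1) :> R by lra.
have h1 : (4 * n%:R + 3) * w <= S.
  move: key e; set ep := dl n * 4 ^+ n => key e.
  have := ler_wpM2l c0 key; rewrite mulrA (mulrC _ ep) e mul1r => h; lra.
have a0 : 0 <= (4 * n%:R + 3) * w by apply: mulr_ge0 => //; lra.
have h2 : ((4 * n%:R + 3) * w) ^+ 2 <= S ^+ 2.
  by rewrite !expr2; apply: ler_pM.
have h3 : 3 * n%:R * w ^+ 2 <= n%:R * T.
  have : 0 <= (16 * n%:R ^+ 2 + 21 * n%:R + 9) * w ^+ 2.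
    by apply: mulr_ge0; [nra | apply: sqr_ge0].
  nra.
nra.
Qed.
End A.


Section F.
Variable R : realType.
Local Notation C := R[i].

Lemma pick_herm (f : C -> C) N (z : 'I_N -> C) : Defs.hermitian (PickM f z).
Proof.
move=> i j; rewrite !mxE fmorph_div !rmorphB !rmorph1 !rmorphM /= !conjCK.
by rewrite (mulrC (f (z j))) (mulrC (z j)).
Qed.

Lemma pick_inertia n N (z : 'I_N -> C) : (forall i, good (z i)) ->
  exists s : seq C, [/\ char_poly (PickM (@fn R n) z) = \prod_(l <- s) ('X - l%:P),
     {in s, forall l, l \is Num.real /\ exists x, Qf (PickM (@fn R n) z) x = l},
     (count (fun l : C => (l < 0)%R) s <= 1)%N &
     ((exists x, Qf (PickM (@fn R n) z) x < 0) -> (0 < count (fun l : C => (l < 0)%R) s)%N)].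
Proof.
move=> hg; apply: (@inertia R N _ (\col_i gg n (z i))); first exact: pick_herm.
move=> x; rewrite /Lf mxE Q_pick // => h.
have -> : \sum_i x 0 i * gg n (z i) = 0.
  by rewrite -[X in _ = X]h; apply: eq_bigr => i _; rewrite mxE.
rewrite mul0r mulr0 subr0; apply: sumr_ge0 => k _; exact: mul_conjC_ge0.
Qed.


Lemma two_z (u : C) : good u -> 2 * u - 1 != 0.
Proof.
move=> [_ hu]; apply: contra hu; rewrite subr_eq0 => /eqP h.
apply/eqP; have h2n : (2:C) != 0 by rewrite pnatr_eq0.
by rewrite -[u](mulKf h2n) h mulr1.
Qed.

Lemma neg_exists n (z : 'I_n.+1 -> C) : injective z -> (forall i, good (z i)) ->
  exists x, Qf (PickM (@fn R n) z) x < 0.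
Proof.
move=> zi hg.
pose a : 'rV[C]_n.+1 := \row_i z i.
pose V := Vandermonde n.+1 a.
have Vu : V \in unitmx.
  rewrite unitmxE det_Vandermonde unitfE; apply/prodf_neq0 => i _.
  apply/prodf_neq0 => j hij; rewrite !mxE subr_eq0; apply/eqP => e.
  by move: hij; rewrite (zi _ _ e) ltnn.
pose c : 'cV[C]_n.+1 := \col_k (2 ^+ (n - k) : C).
pose y := invmx V *m c.
have hV : forall k, (k <= n)%N -> \sum_i z i ^+ k * y i 0 = 2 ^+ (n - k).
  move=> k hk; have := congr1 (fun M : 'cV_n.+1 => M (inord k) 0) (mulKVmx Vu c).
  rewrite /= !mxE inordK //; move=> <-; apply: eq_bigr => i _.
  by rewrite !mxE inordK.
pose x : 'rV[C]_n.+1 := \row_i ((2 * z i - 1) * y i 0).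
exists x; rewrite Q_pick //.
have -> : \sum_i x 0 i * gg n (z i) = 1.
  have h1 := hV n (leqnn n); rewrite subnn expr0 in h1.
  rewrite -h1; apply: eq_bigr => i _.
  rewrite mxE /gg; field; exact: two_z.
rewrite big1; last first.
  move=> k _.
  have -> : \sum_i x 0 i * z i ^+ k = 0.
    have hk := ltn_ord k.
    transitivity (2 * \sum_i z i ^+ k.+1 * y i 0 - \sum_i z i ^+ k * y i 0).
      rewrite mulr_sumr -sumrB; apply: eq_bigr => i _; rewrite mxE exprS; ring.
    rewrite (hV k.+1 hk) (hV k (ltnW hk)).
    have -> : (n - k = (n - k.+1).+1)%N by rewrite subnSK.
    by rewrite exprS subrr.
  by rewrite mul0r.
rewrite mul1r conjC1 mulr1 sub0r oppr_lt0; by [].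
Qed.
End F.


Local Open Scope classical_set_scope.

Section M.
Variable R : realType.
Local Notation C := R[i].

Lemma nrV (x : C) : nr (x^-1) = (nr x)^-1.
Proof. by apply: complexI; rewrite fmorphV -!normE normfV. Qed.

Lemma good_q (u : C) : nr u < 4^-1 -> good u.
Proof.
move=> h; split.
  by rewrite nr_lt; lra.
apply/eqP => e; move: h; rewrite e nrV (@nr_nat R 2); lra.
Qed.

Lemma good_of (u : C) : u \in (disk (R:=R) `\` [set 2^-1]) -> good u.
Proof.
move/set_mem => [hd hn]; split; first exact: hd.
by apply/eqP => e; apply: hn.
Qed.

Lemma neg1 n (z : 'I_n.+1 -> C) : injective z -> (forall i, good (z i)) ->
  neg_eigs (PickM (@fn R n) z) 1.
Proof.
move=> zi hg; have [s [h1 _ h3 h4]] := pick_inertia n hg.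
exists s; split => //; apply/eqP; rewrite eqn_leq h3 h4 //.
exact: neg_exists.
Qed.

End M.

Unset Implicit Arguments.

Theorem mainTheorem10 (R : realType) (n : nat) (hn : (0 < n)%N) :
  S_kappa 1 [set (2 : R[i])^-1] (@fn R n) /\
  (exists delta : R, 0 < delta /\
     forall z : 'I_n -> R[i], injective z ->
       (forall i, `|z i| < (delta%:C)%C) -> psd (PickM (@fn R n) z)) /\
  (exists delta' : R, 0 < delta' /\
     forall z : 'I_n.+1 -> R[i], injective z ->
       (forall i, `|z i| < (delta'%:C)%C) -> neg_eigs (PickM (@fn R n) z) 1).
Proof.
have Lt : forall (i : 'I_n.+1), nr ((i%:R / (4 * n.+1%:R)) : R[i]) < 4^-1.
  move=> i; rewrite nrM nrV nrM !nr_nat.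
  have c0 : 0 < 4 * n.+1%:R :> R by rewrite mulr_gt0 // ltr0n.
  rewrite ltr_pdivrMr // mulrA mulVf ?mul1r ?ltr_nat //.
  by rewrite pnatr_eq0.
split.
  split.
    split.
      move=> u ->; rewrite /disk /= normfV normr_nat invf_lt1 ?ltr0n ?ltr1n //.
    split; first exact: countable1.
    by move=> r _; apply: finite_setIl; exact: finite_set1.
  split.
    move=> N z zi hz; have hg := fun i => good_of (hz i).
    have [s [h1 _ h3 _]] := pick_inertia n hg.
    by exists (count (fun l : R[i] => (l < 0)%R) s); split => //; exists s.
  pose z := fun i : 'I_n.+1 => (i%:R / (4 * n.+1%:R)) : R[i].
  have hg : forall i, good (z i) by move=> i; apply: good_q; apply: Lt.
  have zi : injective z.
    have c0 : (4 * n.+1%:R : R[i])^-1 != 0 by rewrite invr_eq0 mulf_neq0 ?pnatr_eq0.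
    move=> i j; rewrite /z => e; have := mulIf c0 e => /eqP; rewrite eqr_nat => /eqP h.
    exact: val_inj.
  exists n.+1, z; split => //.
  split; last exact: neg1 zi hg.
  move=> i; apply: mem_set; split; first exact: (hg i).1.
  by move=> /= e; have := (hg i).2; rewrite e eqxx.
split.
  exists (dl R n); split; first exact: dl_gt0.
  move=> z _ hz.
  have hz' : forall i, nr (z i) < dl R n by move=> i; rewrite -nr_lt.
  have hg : forall i, good (z i) by move=> i; apply: good_small (hz' i).
  split; first exact: pick_herm.
  move=> l; have [s [h1 h2 _ _]] := pick_inertia n hg.
  rewrite h1 root_prod_XsubC => hl; have [_ [x <-]] := h2 l hl.
  exact: small_psd.
exists 4^-1; split; first by rewrite invr_gt0.
move=> z zi hz; apply: neg1 => // i; apply: good_q; rewrite -nr_lt; exact: hz.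
Qed.
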